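(* For every population instance and pool size bound $G$, $$\max_{T\in\mathcal T^3}u(T)\le \tfrac73\max_{T\in\tilde{\mathcal T}^3}u(T)\quad\text{and}\quad \max_{T\in\mathcal T^4}u(T)\le \tfrac{15}{4}\max_{T\in\tilde{\mathcal T}^4}u(T).$$ That is, $\mathrm{gain}(3)\le 7/3$ and $\mathrm{gain}(4)\le 15/4$.
   Context: Population $[n]=\{1,\dots,n\}$. Individual $i$ is healthy with probability $q_i\in[0,1]$, independently, and has utility $u_i\ge0$. For $S\subseteq[n]$, $q_S=\prod_{i\in S}q_i$ ($q_\emptyset=1$). A test is a set $t\subseteq[n]$ with $|t|\le G$; it is negative iff all its members are healthy. A testing regime with budget $B$ is a tuple $T=(t_1,\dots,t_B)$ of tests; $\mathcal T^B$ is the set of all of them and $\tilde{\mathcal T}^B$ the set of non-overlapping ones (tests pairwise disjoint). $P^T_i$ is the probability that $i$ is in at least one negative test of $T$; welfare is $u(T)=\sum_iu_iP^T_i$. $\mathrm{gain}(B)$ is the supremum over instances of $\max_{\mathcal T^B}u/\max_{\tilde{\mathcal T}^B}u$. *)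

(* Defs.v *)
From mathcomp Require Import all_boot all_order all_algebra.
Set Implicit Arguments. Unset Strict Implicit. Unset Printing Implicit Defensive.
Import Order.TTheory GRing.Theory Num.Theory.
Local Open Scope ring_scope.

(* Population 'I_n; a health state is the set h of healthy individuals. *)
Definition state_prob (R : realFieldType) (n : nat) (q : 'I_n -> R)
  (h : {set 'I_n}) : R :=
  \prod_(i in h) q i * \prod_(i in ~: h) (1 - q i).

Definition regime (n B : nat) := {ffun 'I_B -> {set 'I_n}}.

Definition valid_regime (n B G : nat) (T : regime n B) : bool :=
  [forall j, #|T j| <= G]%N.

Definition nonoverlapping (n B : nat) (T : regime n B) : bool :=
  [forall j, forall k, (j != k) ==> [disjoint T j & T k]].

Definition negative (n : nat) (t h : {set 'I_n}) : bool := t \subset h.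

Definition P_in (R : realFieldType) (n B : nat) (q : 'I_n -> R)
  (T : regime n B) (i : 'I_n) : R :=
  \sum_(h : {set 'I_n} | [exists j, (i \in T j) && negative (T j) h])
     state_prob q h.

Definition welfare (R : realFieldType) (n B : nat) (q u : 'I_n -> R)
  (T : regime n B) : R :=
  \sum_i u i * P_in q T i.

(* Main.v *)
Require Import Defs.
From mathcomp Require Import all_boot all_order all_algebra.
Import Order.TTheory GRing.Theory Num.Theory.
Set Implicit Arguments. Unset Strict Implicit. Unset Printing Implicit Defensive.
Local Open Scope ring_scope.

Definition grp := (seq nat * seq (seq bool))%type.
Definition gdef : grp := ([::], [::]).

Definition pat n B (T : regime n B.+1) (x : 'I_n) : seq bool :=
  [seq x \in T (inord j) | j <- iota 0 B.+1].

Definition gtest n B (T : regime n B.+1) (g : grp) : {set 'I_n} :=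
  [set x | pat T x \in g.2].

Definition mkReg n B (T : regime n B.+1) (cd : seq grp) : regime n B.+1 :=
  [ffun k : 'I_B.+1 => gtest T (nth gdef cd k)].

Definition grp_ok (B : nat) (g : grp) : bool :=
  [&& all (fun j => j < B.+1)%N g.1, (g.2 == [::]) || (g.1 != [::]) &
      all (fun X => all (fun j => nth false X j) g.1) g.2].

Definition cand_ok (B : nat) (cd : seq grp) : bool :=
  [&& (size cd <= B.+1)%N, all (grp_ok B) cd &
   all (fun k => all (fun k' => (k == k') ||
      all (fun X => X \notin (nth gdef cd k').2) (nth gdef cd k).2)
      (iota 0 B.+1)) (iota 0 B.+1)].

Fixpoint allbits (k : nat) : seq (seq bool) :=
  if k is k'.+1 then [seq b :: X | b <- [:: true; false], X <- allbits k']
  else [:: [::]].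

Definition covers (cd : seq grp) (X : seq bool) (j : nat) : nat :=
  has (fun g => (X \in g.2) && (j \in g.1)) cd.

Definition cover_ok (B : nat) (cands : seq (nat * seq grp)) (D : nat) : bool :=
  all (fun X => all (fun j => ~~ nth false X j ||
        (D <= sumn [seq c.1 * covers c.2 X j | c <- cands])%N) (iota 0 B.+1))
   (allbits B.+1).

Lemma allbitsP k X : size X = k -> X \in allbits k.
Proof.
elim: k X => [|k IH] [|b X] //= [hs].
rewrite !mem_cat; case: b; apply/orP; [left|right; apply/orP; left];
  by apply/mapP; exists X => //; apply: IH.
Qed.

Lemma size_pat n B (T : regime n B.+1) x : size (pat T x) = B.+1.
Proof. by rewrite size_map size_iota. Qed.

Lemma nth_pat n B (T : regime n B.+1) x j : (j < B.+1)%N ->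
  nth false (pat T x) j = (x \in T (inord j)).
Proof. by move=> hj; rewrite (nth_map 0%N) ?size_iota // nth_iota. Qed.

Lemma gtest_sub n B (T : regime n B.+1) g j : grp_ok B g -> j \in g.1 ->
  gtest T g \subset T (inord j).
Proof.
case/and3P=> hB _ hA hj; apply/subsetP => x; rewrite inE => hx.
have := allP hA _ hx => /allP /(_ _ hj).
by rewrite nth_pat //; apply: (allP hB).
Qed.

Lemma gtest_card n B G (T : regime n B.+1) g : valid_regime G T -> grp_ok B g ->
  (#|gtest T g| <= G)%N.
Proof.
move=> hv hg; case/and3P: (hg) => _ /orP [/eqP e|ne] _.
  rewrite (_ : gtest T g = set0) ?cards0 //.
  by apply/setP => x; rewrite !inE e.
case: g hg ne => [[|j C] A] //= hg _.
have hs := gtest_sub T hg (mem_head j C).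
apply: leq_trans (subset_leq_card hs) _.
by move/forallP: hv.
Qed.

Lemma nth_grp_ok B cd k : cand_ok B cd -> grp_ok B (nth gdef cd k).
Proof.
case/and3P=> _ ha _; case: (ltnP k (size cd)) => hk.
  by apply: (allP ha); rewrite mem_nth.
by rewrite nth_default.
Qed.

Lemma mkReg_valid n B G (T : regime n B.+1) cd : valid_regime G T -> cand_ok B cd ->
  valid_regime G (mkReg T cd).
Proof.
move=> hv hc; apply/forallP => k; rewrite ffunE.
exact: gtest_card hv (nth_grp_ok _ hc).
Qed.

Lemma mem_iota_ord B (k : 'I_B) : (val k \in iota 0 B).
Proof. by rewrite mem_iota /= ltn_ord. Qed.

Lemma mkReg_nonov n B (T : regime n B.+1) cd : cand_ok B cd ->
  nonoverlapping (mkReg T cd).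
Proof.
case/and3P=> _ _ hd; apply/forallP => j; apply/forallP => k; apply/implyP => hjk.
rewrite !ffunE disjoint_subset; apply/subsetP => x; rewrite !inE => h1.
apply/negP => h2.
have := allP hd _ (mem_iota_ord j) => /allP /(_ _ (mem_iota_ord k)).
case/orP => [/eqP/val_inj e|]; first by rewrite e eqxx in hjk.
by move/allP/(_ _ h1); rewrite h2.
Qed.

Definition Ev n B (T : regime n B) i h : bool :=
  [exists j, (i \in T j) && negative (T j) h].

Lemma P_inE (R : realFieldType) n B (q : 'I_n -> R) (T : regime n B) i :
  P_in q T i = \sum_h (Ev T i h)%:R * state_prob q h.
Proof.
rewrite /P_in big_mkcond; apply: eq_bigr => h _.
by rewrite /Ev; case: ifP; rewrite ?mul1r ?mul0r.
Qed.

Lemma state_prob_ge0 (R : realFieldType) n (q : 'I_n -> R)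
  (hq : forall i, 0 <= q i <= 1) h : 0 <= state_prob q h.
Proof.
rewrite /state_prob mulr_ge0 // prodr_ge0 // => i _; case/andP: (hq i) => // _.
by rewrite subr_ge0.
Qed.

Lemma P_in_ge0 (R : realFieldType) n B (q : 'I_n -> R)
  (hq : forall i, 0 <= q i <= 1) (T : regime n B) i : 0 <= P_in q T i.
Proof. by apply: sumr_ge0 => h _; apply: state_prob_ge0. Qed.

Lemma welfare_ge0 (R : realFieldType) n B (q u : 'I_n -> R)
  (hq : forall i, 0 <= q i <= 1) (hu : forall i, 0 <= u i) (T : regime n B) :
  0 <= welfare q u T.
Proof. by apply: sumr_ge0 => i _; rewrite mulr_ge0 // P_in_ge0. Qed.

Lemma covers_Ev n B (T : regime n B.+1) cd i (h : {set 'I_n}) (j : 'I_B.+1) :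
  cand_ok B cd -> T j \subset h -> i \in T j ->
  has (fun g => (pat T i \in g.2) && (val j \in g.1)) cd ->
  Ev (mkReg T cd) i h.
Proof.
move=> hc hh hi /(has_nthP gdef) [k hk /andP [hX hj]].
have hsz : (size cd <= B.+1)%N by case/and3P: hc.
apply/existsP; exists (Ordinal (leq_trans hk hsz)); rewrite ffunE /=.
apply/andP; split; first by rewrite inE.
rewrite /negative; apply: subset_trans (gtest_sub T (nth_grp_ok _ hc) hj) _.
by rewrite inord_val.
Qed.

Lemma P_cover (R : realFieldType) n B (q : 'I_n -> R)
  (hq : forall i, 0 <= q i <= 1) (T : regime n B.+1)
  (cands : seq (nat * seq grp)) (D : nat) i :
  (0 < D)%N -> cover_ok B cands D -> all (fun c => cand_ok B c.2) cands ->
  P_in q T i <= \sum_(c <- cands) (c.1%:R / D%:R) * P_in q (mkReg T c.2) i.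
Proof.
move=> hD hcov hall.
rewrite [X in X <= _]P_inE.
under [X in _ <= X]eq_bigr => c _ do rewrite P_inE mulr_sumr.
rewrite exchange_big /=; apply: ler_sum => h _.
under eq_bigr do rewrite mulrA; rewrite -mulr_suml.
apply: ler_wpM2r; first exact: state_prob_ge0.
case E: (Ev T i h); last first.
  by apply: sumr_ge0 => c _; rewrite mulr_ge0 // divr_ge0 // ler0n.
case/existsP: E => j /andP [hi hneg].
have key : (D <= \sum_(c <- cands) c.1 * Ev (mkReg T c.2) i h)%N.
  have := allP hcov _ (allbitsP (size_pat T i)) => /allP /(_ _ (mem_iota_ord j)).
  rewrite nth_pat ?ltn_ord // inord_val hi /= => hD'; apply: leq_trans hD' _.
  rewrite sumnE big_map !big_seq; apply: leq_sum => c hc.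
  rewrite leq_mul2l; apply/orP; right.
  rewrite /covers; case hh: (has _ _) => //=.
  by rewrite (covers_Ev (allP hall _ hc) hneg hi hh).
rewrite (_ : \sum_(c <- cands) _ =
   (\sum_(c <- cands) c.1 * Ev (mkReg T c.2) i h)%:R / D%:R); last first.
  rewrite natr_sum mulr_suml; apply: eq_bigr => c _; by rewrite natrM mulrAC.
by rewrite ler_pdivlMr ?ltr0n // mul1r ler_nat.
Qed.

Lemma argmax (R : realFieldType) (A : eqType) (s : seq A) (f : A -> R) :
  s != [::] -> exists2 x, x \in s & forall y, y \in s -> f y <= f x.
Proof.
elim: s => [|a s IH] // _; case: s IH => [|b s] IH.
  by exists a; rewrite ?mem_head // => y; rewrite inE => /eqP ->.
have [x hx hm] := IH isT.
case: (lerP (f x) (f a)) => hxa.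
  exists a; first exact: mem_head.
  move=> y; rewrite inE => /orP [/eqP -> //|hy]; exact: le_trans (hm _ hy) hxa.
exists x; first by rewrite inE hx orbT.
move=> y; rewrite inE => /orP [/eqP ->|hy]; [exact: ltW | exact: hm].
Qed.

Lemma gen_bound (R : realFieldType) n B G (q u : 'I_n -> R)
  (hq : forall i, 0 <= q i <= 1) (hu : forall i, 0 <= u i)
  (cands : seq (nat * seq grp)) (D a b : nat) (T : regime n B.+1) :
  valid_regime G T -> (0 < D)%N -> (0 < a)%N -> cover_ok B cands D ->
  all (fun c => cand_ok B c.2) cands -> cands != [::] ->
  (sumn (map fst cands) * a <= b * D)%N ->
  exists T' : regime n B.+1, [/\ valid_regime G T', nonoverlapping T' &
     welfare q u T <= b%:R / a%:R * welfare q u T'].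
Proof.
move=> hv hD ha hcov hall hne hS.
have [x hx hm] := argmax (fun c : nat * seq grp => welfare q u (mkReg T c.2)) hne.
have hok := allP hall _ hx.
exists (mkReg T x.2); split; [exact: mkReg_valid | exact: mkReg_nonov |].
have h1 : welfare q u T <=
    \sum_(c <- cands) (c.1%:R / D%:R) * welfare q u (mkReg T c.2).
  rewrite /welfare.
  under [X in _ <= X]eq_bigr => c _ do rewrite mulr_sumr.
  rewrite exchange_big /=; apply: ler_sum => i _.
  under eq_bigr => c _ do rewrite mulrCA.
  rewrite -mulr_sumr; apply: ler_wpM2l => //; exact: P_cover.
apply: le_trans h1 _.
apply: le_trans (_ : _ <= \sum_(c <- cands) (c.1%:R / D%:R) * welfare q u (mkReg T x.2)) _.
  rewrite !big_seq; apply: ler_sum => c hc; apply: ler_wpM2l; last exact: hm.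
  by rewrite divr_ge0 // ler0n.
rewrite -mulr_suml; apply: ler_wpM2r; first exact: welfare_ge0.
rewrite -mulr_suml -natr_sum.
rewrite (_ : (\sum_(c <- cands) c.1 = sumn (map fst cands))%N); last by rewrite sumnE big_map.
rewrite ler_pdivrMr ?ltr0n // mulrAC ler_pdivlMr ?ltr0n // -!natrM ler_nat.
exact: hS.
Qed.

Definition cands3 : seq (nat * seq (seq nat * seq (seq bool))) := [::
  (1, [:: ([:: 0], [:: [:: true; false; false]; [:: true; false; true]]); ([:: 1], [:: [:: false; true; false]; [:: true; true; false]]); ([:: 1; 2], [:: [:: false; true; true]; [:: true; true; true]])]);
  (1, [:: ([:: 0], [:: [:: true; false; false]; [:: true; true; false]]); ([:: 1], [:: [:: false; true; false]; [:: false; true; true]]); ([:: 0; 2], [:: [:: true; false; true]; [:: true; true; true]])]);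
  (1, [:: ([:: 1], [:: [:: false; true; false]; [:: true; true; false]; [:: false; true; true]]); ([:: 2], [:: [:: false; false; true]]); ([:: 0; 2], [:: [:: true; false; true]; [:: true; true; true]])]);
  (1, [:: ([:: 1], [:: [:: false; true; false]]); ([:: 2], [:: [:: false; false; true]; [:: true; false; true]; [:: false; true; true]]); ([:: 0; 1], [:: [:: true; true; false]; [:: true; true; true]])]);
  (1, [:: ([:: 0], [:: [:: true; false; false]; [:: true; true; false]]); ([:: 2], [:: [:: false; false; true]; [:: true; false; true]]); ([:: 1; 2], [:: [:: false; true; true]; [:: true; true; true]])]);
  (1, [:: ([:: 0], [:: [:: true; false; false]; [:: true; false; true]]); ([:: 2], [:: [:: false; false; true]; [:: false; true; true]]); ([:: 0; 1], [:: [:: true; true; false]; [:: true; true; true]])])]%N.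

Definition cands4 : seq (nat * seq (seq nat * seq (seq bool))) := [::
  (10, [:: ([:: 0], [:: [:: true; false; false; false]; [:: true; false; true; false]; [:: true; false; false; true]]); ([:: 1], [:: [:: false; true; false; false]; [:: false; true; true; false]; [:: false; true; false; true]]); ([:: 0; 1], [:: [:: true; true; false; false]; [:: true; true; true; false]; [:: true; true; false; true]; [:: true; true; true; true]]); ([:: 2; 3], [:: [:: false; false; true; true]; [:: true; false; true; true]; [:: false; true; true; true]])]);
  (3, [:: ([:: 0], [:: [:: true; false; false; false]; [:: true; true; false; false]; [:: true; false; true; true]]); ([:: 2], [:: [:: false; false; true; false]; [:: true; false; true; false]; [:: false; true; true; false]; [:: false; false; true; true]; [:: true; true; true; false]]); ([:: 3], [:: [:: false; false; false; true]; [:: true; false; false; true]; [:: false; true; false; true]; [:: true; true; false; true]]); ([:: 1; 2; 3], [:: [:: false; true; true; true]; [:: true; true; true; true]])]);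
  (5, [:: ([:: 1], [:: [:: false; true; false; false]; [:: true; true; false; false]; [:: false; true; true; false]; [:: false; true; false; true]; [:: true; true; true; false]; [:: false; true; true; true]]); ([:: 2], [:: [:: false; false; true; false]; [:: true; false; true; false]; [:: true; false; true; true]]); ([:: 3], [:: [:: false; false; false; true]; [:: true; false; false; true]; [:: false; false; true; true]]); ([:: 0; 1; 3], [:: [:: true; true; false; true]; [:: true; true; true; true]])]);
  (2, [:: ([:: 0], [:: [:: true; false; false; false]; [:: true; true; false; false]; [:: true; false; true; false]; [:: true; false; false; true]; [:: true; false; true; true]]); ([:: 2], [:: [:: false; false; true; false]; [:: false; true; true; false]]); ([:: 3], [:: [:: false; false; false; true]; [:: false; true; false; true]; [:: false; false; true; true]; [:: true; true; false; true]; [:: false; true; true; true]]); ([:: 0; 1; 2], [:: [:: true; true; true; false]; [:: true; true; true; true]])]);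
  (2, [:: ([:: 0], [:: [:: true; false; false; false]; [:: true; true; false; false]; [:: true; false; true; false]; [:: true; true; true; false]]); ([:: 1], [:: [:: false; true; false; false]; [:: false; true; true; false]; [:: false; true; true; true]]); ([:: 3], [:: [:: false; false; false; true]; [:: true; false; false; true]; [:: false; true; false; true]; [:: false; false; true; true]; [:: true; true; false; true]]); ([:: 0; 2; 3], [:: [:: true; false; true; true]; [:: true; true; true; true]])]);
  (3, [:: ([:: 0], [:: [:: true; false; false; false]; [:: true; false; false; true]]); ([:: 1], [:: [:: false; true; false; false]; [:: true; true; false; false]; [:: false; true; true; false]; [:: true; true; false; true]; [:: false; true; true; true]]); ([:: 3], [:: [:: false; false; false; true]; [:: false; true; false; true]; [:: false; false; true; true]]); ([:: 0; 2], [:: [:: true; false; true; false]; [:: true; true; true; false]; [:: true; false; true; true]; [:: true; true; true; true]])]);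
  (1, [:: ([:: 0], [:: [:: true; false; false; false]; [:: true; false; true; false]]); ([:: 1], [:: [:: false; true; false; false]; [:: true; true; false; false]; [:: false; true; false; true]; [:: true; true; true; false]; [:: false; true; true; true]]); ([:: 2], [:: [:: false; false; true; false]; [:: false; true; true; false]; [:: false; false; true; true]]); ([:: 0; 3], [:: [:: true; false; false; true]; [:: true; true; false; true]; [:: true; false; true; true]; [:: true; true; true; true]])]);
  (4, [:: ([:: 0], [:: [:: true; false; false; false]; [:: true; false; false; true]; [:: true; true; false; true]]); ([:: 1], [:: [:: false; true; false; false]; [:: true; true; false; false]; [:: false; true; false; true]; [:: true; true; true; false]]); ([:: 2], [:: [:: false; false; true; false]; [:: true; false; true; false]; [:: false; true; true; false]]); ([:: 2; 3], [:: [:: false; false; true; true]; [:: true; false; true; true]; [:: false; true; true; true]; [:: true; true; true; true]])]);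
  (9, [:: ([:: 1], [:: [:: false; true; false; false]; [:: true; true; false; false]; [:: false; true; false; true]]); ([:: 2], [:: [:: false; false; true; false]; [:: true; false; true; false]; [:: false; true; true; false]; [:: false; false; true; true]; [:: false; true; true; true]]); ([:: 0; 3], [:: [:: true; false; false; true]; [:: true; true; false; true]; [:: true; false; true; true]]); ([:: 0; 1; 2], [:: [:: true; true; true; false]; [:: true; true; true; true]])]);
  (4, [:: ([:: 0], [:: [:: true; false; false; false]; [:: true; true; false; false]; [:: true; false; true; false]]); ([:: 3], [:: [:: false; false; false; true]; [:: true; false; false; true]; [:: false; true; false; true]; [:: false; false; true; true]; [:: true; false; true; true]]); ([:: 1; 2], [:: [:: false; true; true; false]; [:: true; true; true; false]; [:: false; true; true; true]]); ([:: 0; 1; 3], [:: [:: true; true; false; true]; [:: true; true; true; true]])]);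
  (4, [:: ([:: 0], [:: [:: true; false; false; false]; [:: true; true; false; false]; [:: true; false; true; false]; [:: true; true; true; false]]); ([:: 2], [:: [:: false; false; true; false]; [:: false; true; true; false]; [:: false; false; true; true]; [:: true; false; true; true]]); ([:: 3], [:: [:: false; false; false; true]; [:: true; false; false; true]]); ([:: 1; 3], [:: [:: false; true; false; true]; [:: true; true; false; true]; [:: false; true; true; true]; [:: true; true; true; true]])]);
  (9, [:: ([:: 2], [:: [:: false; false; true; false]; [:: true; false; true; false]; [:: false; true; true; false]; [:: false; false; true; true]]); ([:: 3], [:: [:: false; false; false; true]; [:: true; false; false; true]; [:: false; true; false; true]; [:: false; true; true; true]]); ([:: 0; 1], [:: [:: true; true; false; false]; [:: true; true; true; false]; [:: true; true; false; true]]); ([:: 0; 2; 3], [:: [:: true; false; true; true]; [:: true; true; true; true]])]);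
  (2, [:: ([:: 0], [:: [:: true; false; false; false]; [:: true; true; false; false]; [:: true; false; true; false]; [:: true; false; false; true]; [:: true; true; true; false]]); ([:: 1], [:: [:: false; true; false; false]; [:: false; true; true; false]; [:: false; true; false; true]]); ([:: 3], [:: [:: false; false; false; true]; [:: false; false; true; true]; [:: true; true; false; true]; [:: true; false; true; true]]); ([:: 1; 2; 3], [:: [:: false; true; true; true]; [:: true; true; true; true]])]);
  (9, [:: ([:: 0], [:: [:: true; false; false; false]; [:: true; true; false; false]; [:: true; false; false; true]]); ([:: 2], [:: [:: false; false; true; false]; [:: false; true; true; false]; [:: false; false; true; true]]); ([:: 0; 2], [:: [:: true; false; true; false]; [:: true; true; true; false]; [:: true; false; true; true]]); ([:: 1; 3], [:: [:: false; true; false; true]; [:: true; true; false; true]; [:: false; true; true; true]; [:: true; true; true; true]])]);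
  (2, [:: ([:: 1], [:: [:: false; true; false; false]; [:: true; true; false; false]; [:: false; true; true; false]; [:: true; true; true; false]]); ([:: 2], [:: [:: false; false; true; false]; [:: true; false; true; false]; [:: true; false; true; true]]); ([:: 3], [:: [:: false; false; false; true]; [:: true; false; false; true]; [:: false; true; false; true]; [:: false; false; true; true]; [:: true; true; false; true]]); ([:: 1; 2; 3], [:: [:: false; true; true; true]; [:: true; true; true; true]])]);
  (3, [:: ([:: 1], [:: [:: false; true; false; false]; [:: true; true; false; false]; [:: false; true; false; true]; [:: true; true; false; true]]); ([:: 2], [:: [:: false; false; true; false]; [:: true; false; true; false]]); ([:: 3], [:: [:: false; false; false; true]; [:: true; false; false; true]; [:: false; false; true; true]; [:: true; false; true; true]]); ([:: 1; 2], [:: [:: false; true; true; false]; [:: true; true; true; false]; [:: false; true; true; true]; [:: true; true; true; true]])]);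
  (5, [:: ([:: 0], [:: [:: true; false; false; false]; [:: true; true; false; false]; [:: true; false; true; false]; [:: true; false; false; true]]); ([:: 1], [:: [:: false; true; false; false]; [:: false; true; true; false]; [:: false; true; false; true]; [:: true; true; false; true]]); ([:: 2], [:: [:: false; false; true; false]; [:: true; true; true; false]]); ([:: 2; 3], [:: [:: false; false; true; true]; [:: true; false; true; true]; [:: false; true; true; true]; [:: true; true; true; true]])]);
  (1, [:: ([:: 1], [:: [:: false; true; false; false]; [:: true; true; false; false]; [:: false; true; false; true]; [:: false; true; true; true]]); ([:: 2], [:: [:: false; false; true; false]; [:: true; false; true; false]; [:: false; true; true; false]; [:: true; true; true; false]]); ([:: 3], [:: [:: false; false; false; true]; [:: false; false; true; true]]); ([:: 0; 3], [:: [:: true; false; false; true]; [:: true; true; false; true]; [:: true; false; true; true]; [:: true; true; true; true]])]);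
  (4, [:: ([:: 0], [:: [:: true; false; false; false]; [:: true; false; true; false]; [:: true; false; false; true]; [:: true; true; false; true]; [:: true; false; true; true]]); ([:: 1], [:: [:: false; true; false; false]; [:: true; true; false; false]]); ([:: 3], [:: [:: false; false; false; true]; [:: false; true; false; true]; [:: false; false; true; true]]); ([:: 1; 2], [:: [:: false; true; true; false]; [:: true; true; true; false]; [:: false; true; true; true]; [:: true; true; true; true]])]);
  (1, [:: ([:: 1], [:: [:: false; true; false; false]; [:: true; true; false; false]; [:: false; true; true; false]; [:: false; true; false; true]]); ([:: 2], [:: [:: false; false; true; false]; [:: false; true; true; true]]); ([:: 3], [:: [:: false; false; false; true]; [:: true; false; false; true]; [:: false; false; true; true]; [:: true; true; false; true]]); ([:: 0; 2], [:: [:: true; false; true; false]; [:: true; true; true; false]; [:: true; false; true; true]; [:: true; true; true; true]])]);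
  (2, [:: ([:: 0], [:: [:: true; false; false; false]; [:: true; true; false; false]; [:: true; false; false; true]; [:: true; true; true; false]; [:: true; true; false; true]; [:: true; false; true; true]]); ([:: 1], [:: [:: false; true; false; false]; [:: false; true; true; false]; [:: false; true; false; true]]); ([:: 2], [:: [:: false; false; true; false]; [:: true; false; true; false]; [:: false; false; true; true]]); ([:: 1; 2; 3], [:: [:: false; true; true; true]; [:: true; true; true; true]])]);
  (8, [:: ([:: 0], [:: [:: true; false; false; false]; [:: true; true; false; false]; [:: true; false; true; false]]); ([:: 3], [:: [:: false; false; false; true]; [:: false; true; false; true]; [:: false; false; true; true]]); ([:: 0; 3], [:: [:: true; false; false; true]; [:: true; true; false; true]; [:: true; false; true; true]; [:: true; true; true; true]]); ([:: 1; 2], [:: [:: false; true; true; false]; [:: true; true; true; false]; [:: false; true; true; true]])]);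
  (2, [:: ([:: 1], [:: [:: false; true; false; false]; [:: true; true; false; false]; [:: false; true; true; true]]); ([:: 2], [:: [:: false; false; true; false]; [:: false; true; true; false]; [:: false; false; true; true]]); ([:: 3], [:: [:: false; false; false; true]; [:: true; false; false; true]; [:: false; true; false; true]; [:: true; true; false; true]]); ([:: 0; 2], [:: [:: true; false; true; false]; [:: true; true; true; false]; [:: true; false; true; true]; [:: true; true; true; true]])]);
  (3, [:: ([:: 1], [:: [:: false; true; false; false]; [:: true; true; false; false]; [:: false; true; true; false]; [:: false; true; false; true]]); ([:: 2], [:: [:: false; false; true; false]; [:: true; false; true; false]; [:: false; false; true; true]; [:: true; true; true; false]]); ([:: 0; 3], [:: [:: true; false; false; true]; [:: true; true; false; true]; [:: true; false; true; true]]); ([:: 1; 2; 3], [:: [:: false; true; true; true]; [:: true; true; true; true]])]);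
  (1, [:: ([:: 0], [:: [:: true; false; false; false]; [:: true; true; false; false]; [:: true; false; true; false]; [:: true; false; true; true]]); ([:: 1], [:: [:: false; true; false; false]; [:: false; true; true; false]; [:: true; true; true; false]]); ([:: 3], [:: [:: false; false; false; true]; [:: true; false; false; true]; [:: false; true; false; true]; [:: false; false; true; true]; [:: false; true; true; true]]); ([:: 0; 1; 3], [:: [:: true; true; false; true]; [:: true; true; true; true]])]);
  (9, [:: ([:: 1], [:: [:: false; true; false; false]; [:: true; true; false; false]; [:: false; true; true; false]]); ([:: 3], [:: [:: false; false; false; true]; [:: true; false; false; true]; [:: false; false; true; true]]); ([:: 0; 2], [:: [:: true; false; true; false]; [:: true; true; true; false]; [:: true; false; true; true]; [:: true; true; true; true]]); ([:: 1; 3], [:: [:: false; true; false; true]; [:: true; true; false; true]; [:: false; true; true; true]])]);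
  (2, [:: ([:: 0], [:: [:: true; false; false; false]; [:: true; true; false; false]; [:: true; false; false; true]; [:: true; true; false; true]]); ([:: 2], [:: [:: false; false; true; false]; [:: true; false; true; false]; [:: false; false; true; true]]); ([:: 3], [:: [:: false; false; false; true]; [:: false; true; false; true]; [:: true; false; true; true]]); ([:: 1; 2], [:: [:: false; true; true; false]; [:: true; true; true; false]; [:: false; true; true; true]; [:: true; true; true; true]])]);
  (2, [:: ([:: 0], [:: [:: true; false; false; false]; [:: true; true; false; false]; [:: true; false; true; false]; [:: true; false; false; true]; [:: true; true; true; false]; [:: true; false; true; true]]); ([:: 2], [:: [:: false; false; true; false]; [:: false; true; true; false]; [:: false; false; true; true]; [:: false; true; true; true]]); ([:: 3], [:: [:: false; false; false; true]; [:: false; true; false; true]]); ([:: 0; 1; 3], [:: [:: true; true; false; true]; [:: true; true; true; true]])]);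
  (2, [:: ([:: 2], [:: [:: false; false; true; false]; [:: true; false; true; false]; [:: false; true; true; false]]); ([:: 3], [:: [:: false; false; false; true]; [:: true; false; false; true]; [:: false; true; false; true]]); ([:: 0; 1], [:: [:: true; true; false; false]; [:: true; true; true; false]; [:: true; true; false; true]]); ([:: 2; 3], [:: [:: false; false; true; true]; [:: true; false; true; true]; [:: false; true; true; true]; [:: true; true; true; true]])]);
  (1, [:: ([:: 0], [:: [:: true; false; false; false]; [:: true; false; false; true]; [:: true; true; true; false]; [:: true; false; true; true]]); ([:: 1], [:: [:: false; true; false; false]; [:: true; true; false; false]; [:: false; true; true; false]]); ([:: 2], [:: [:: false; false; true; false]; [:: true; false; true; false]; [:: false; false; true; true]]); ([:: 1; 3], [:: [:: false; true; false; true]; [:: true; true; false; true]; [:: false; true; true; true]; [:: true; true; true; true]])]);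
  (1, [:: ([:: 0], [:: [:: true; false; false; false]; [:: true; true; false; false]; [:: true; false; false; true]; [:: true; true; true; false]]); ([:: 2], [:: [:: false; false; true; false]; [:: true; false; true; false]; [:: false; true; true; false]; [:: false; false; true; true]; [:: true; false; true; true]]); ([:: 3], [:: [:: false; false; false; true]; [:: false; true; false; true]; [:: false; true; true; true]]); ([:: 0; 1; 3], [:: [:: true; true; false; true]; [:: true; true; true; true]])])]%N.


Lemma cands3_cov : cover_ok 2 cands3 4.
Proof. by vm_compute. Qed.
Lemma cands3_ok : all (fun c => cand_ok 2 c.2) cands3.
Proof. by vm_compute. Qed.
Lemma cands4_cov : cover_ok 3 cands4 60.
Proof. by vm_compute. Qed.
Lemma cands4_ok : all (fun c => cand_ok 3 c.2) cands4.
Proof. by vm_compute. Qed.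
Lemma cands3_sum : (sumn (map fst cands3) * 3 <= 7 * 4)%N.
Proof. by vm_compute. Qed.
Lemma cands4_sum : (sumn (map fst cands4) * 4 <= 15 * 60)%N.
Proof. by vm_compute. Qed.

Theorem mainTheorem6 (R : realFieldType) (n G : nat) (q u : 'I_n -> R)
  (hq : forall i, 0 <= q i <= 1) (hu : forall i, 0 <= u i) :
  (forall T : regime n 3, valid_regime G T ->
     exists T' : regime n 3, [/\ valid_regime G T', nonoverlapping T' &
       welfare q u T <= 7%:R / 3%:R * welfare q u T'])
  /\
  (forall T : regime n 4, valid_regime G T ->
     exists T' : regime n 4, [/\ valid_regime G T', nonoverlapping T' &
       welfare q u T <= 15%:R / 4%:R * welfare q u T']).
Proof.
split=> T hv.
  exact: (@gen_bound R n 2 G q u hq hu cands3 4 3 7 T hv isT isT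
            cands3_cov cands3_ok isT cands3_sum).
exact: (@gen_bound R n 3 G q u hq hu cands4 60 4 15 T hv isT isT
          cands4_cov cands4_ok isT cands4_sum).
Qed.
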